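(* Let $G$ be a graph on $[n]$ whose connected components are $C_1,\dots,C_k$, and suppose that for all $i\neq j$ no edge of $C_i$ crosses an edge of $C_j$. Then $NC_G\cong NC_{C_1}\times NC_{C_2}\times\cdots\times NC_{C_k}$.
   Context: Graphs are finite simple graphs whose vertices are distinct positive integers; edges are written $ij$ with $i<j$. Two edges $a_1a_2$ and $b_1b_2$ cross if $a_1<b_1<a_2<b_2$ or $b_1<a_1<b_2<a_2$. A spanning subgraph is identified with its edge set. A bond of a graph $X$ is a spanning subgraph of $X$ each of whose connected components is an induced subgraph of $X$. A set partition of the vertex set is crossing if there are distinct blocks $B,B'$ and $a,c\in B$, $b,d\in B'$ with $a<b<c<d$, noncrossing otherwise; a bond is noncrossing if the partition of the vertex set into vertex sets of its connected components is noncrossing. $NC_X$ denotes the poset of noncrossing bonds of $X$ ordered by inclusion of edge sets. *)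

(* Defs.v *)
(* Vertices of a graph on [n] = {1,...,n} are represented by
   'I_n (vertex i+1 <-> ordinal i); this shift preserves the order, hence
   crossings and noncrossingness. *)
From mathcomp Require Import all_boot.
Set Implicit Arguments. Unset Strict Implicit. Unset Printing Implicit Defensive.

Section Defs.
Variable n : nat.
Implicit Types (e : rel 'I_n) (V : {set 'I_n}) (B : {set 'I_n * 'I_n}).

Definition simple_graph e := symmetric e /\ irreflexive e.

Definition edges e V : {set 'I_n * 'I_n} :=
  [set p : 'I_n * 'I_n | [&& p.1 < p.2, p.1 \in V, p.2 \in V & e p.1 p.2]].

Definition adj B : rel 'I_n := fun x y => ((x, y) \in B) || ((y, x) \in B).

(* B is a bond of X = (V, edges e V): a spanning subgraph each of whose
   connected components is an induced subgraph of X, i.e. every edge of X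
   joining two vertices of the same component of B belongs to B. *)
Definition is_bond e V B : bool :=
  (B \subset edges e V) &&
  [forall p in edges e V, connect (adj B) p.1 p.2 ==> (p \in B)].

(* The partition of V into vertex sets of components of B is noncrossing:
   no a<b<c<d in V with a,c in one block and b,d in a distinct block. *)
Definition noncrossing_bond V B : bool :=
  ~~ [exists a in V, exists b in V, exists c in V, exists d in V,
        [&& a < b, b < c, c < d, connect (adj B) a c, connect (adj B) b d &
            ~~ connect (adj B) a b]].

(* NC_X as a set of edge sets; its order is inclusion of edge sets. *)
Definition NC e V : {set {set 'I_n * 'I_n}} :=
  [set B : {set 'I_n * 'I_n} | is_bond e V B && noncrossing_bond V B].

Definition components e : {set {set 'I_n}} :=
  [set [set y | connect e x y] | x : 'I_n].

Definition cross (p q : 'I_n * 'I_n) : bool :=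
  ((p.1 < q.1) && (q.1 < p.2) && (p.2 < q.2)) ||
  ((q.1 < p.1) && (p.1 < q.2) && (q.2 < p.2)).

(* Elements of the product poset prod_{C component} NC_C, encoded as finite
   functions from vertex sets to edge sets that are an element of NC_C on
   each component C and empty elsewhere. *)
Definition NCprod e : {set {ffun {set 'I_n} -> {set 'I_n * 'I_n}}} :=
  [set F : {ffun {set 'I_n} -> {set 'I_n * 'I_n}} | [forall C : {set 'I_n}, if C \in components e then F C \in NC e C
                      else F C == set0]].

Definition prod_le e (F F' : {ffun {set 'I_n} -> {set 'I_n * 'I_n}}) : bool :=
  [forall C in components e, F C \subset F' C].

End Defs.

(* Main.v *)
Require Import Defs.
From mathcomp Require Import all_boot.
From mathcomp Require Import zify.
Set Implicit Arguments. Unset Strict Implicit. Unset Printing Implicit Defensive.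

Definition comp n (e : rel 'I_n) x : {set 'I_n} := [set y | connect e x y].

Lemma comp_in n (e : rel 'I_n) x : comp e x \in components e.
Proof. by apply/imsetP; exists x. Qed.

Lemma componentsP n (e : rel 'I_n) C : C \in components e -> exists x, C = comp e x.
Proof. by case/imsetP=> x _ ->; exists x. Qed.

Lemma comp_eq n (e : rel 'I_n) x y : symmetric e -> y \in comp e x -> comp e y = comp e x.
Proof.
move=> sym; rewrite inE => Hxy; apply/setP=> z; rewrite !inE.
apply/idP/idP => H; first exact: connect_trans Hxy H.
by rewrite (sym_connect_sym sym) in Hxy; exact: connect_trans Hxy H.
Qed.

Lemma adj_e n (e : rel 'I_n) (B : {set 'I_n * 'I_n}) x y :
  symmetric e -> B \subset edges e setT -> adj B x y -> e x y.
Proof.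
move=> sym sB; case/orP=> /(subsetP sB); rewrite inE /= => /and4P[_ _ _ //].
by rewrite sym.
Qed.

Lemma adj_lt n (B : {set 'I_n * 'I_n}) (e : rel 'I_n) x y :
  B \subset edges e setT -> adj B x y ->
  exists2 p, p \in B & ((p.1 == x) && (p.2 == y)) || ((p.1 == y) && (p.2 == x)).
Proof.
move=> sB; case/orP=> H.
  by exists (x, y) => //=; rewrite !eqxx.
by exists (y, x) => //=; rewrite !eqxx orbT.
Qed.

Lemma connect_adj_e n (e : rel 'I_n) (B : {set 'I_n * 'I_n}) x y :
  symmetric e -> B \subset edges e setT -> connect (adj B) x y -> connect e x y.
Proof.
move=> sym sB; apply: connect_sub => u v H; apply: connect1; exact: adj_e H.
Qed.

Lemma adj_mono n (B1 B2 : {set 'I_n * 'I_n}) x y :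
  B1 \subset B2 -> connect (adj B1) x y -> connect (adj B2) x y.
Proof.
move=> s; apply: connect_sub => u v H; apply: connect1.
by case/orP: H => H; rewrite /adj (subsetP s _ H) ?orbT.
Qed.

Lemma restrict_path n (e : rel 'I_n) (B : {set 'I_n * 'I_n}) x0 s z :
  symmetric e -> B \subset edges e setT -> z \in comp e x0 -> path (adj B) z s ->
  path (adj (B :&: edges e (comp e x0))) z s.
Proof.
move=> sym sB; elim: s z => [|t s IH] z //= Hz /andP[Hzt Hp].
have Ht : t \in comp e x0.
  by move: Hz; rewrite !inE => Hz; apply: connect_trans Hz (connect1 (adj_e sym sB Hzt)).
rewrite IH // andbT.
case/orP: Hzt => H; move: (H); move/(subsetP sB); rewrite inE /= => /and4P[lt _ _ ez].
  by rewrite /adj inE H inE /= lt Hz Ht ez.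
by rewrite /adj [X in _ || X]inE H [X in _ || (_ && X)]inE /= lt Hz Ht ez orbT.
Qed.

Lemma restrict n (e : rel 'I_n) (B : {set 'I_n * 'I_n}) x y :
  symmetric e -> B \subset edges e setT -> connect (adj B) x y ->
  connect (adj (B :&: edges e (comp e x))) x y.
Proof.
move=> sym sB /connectP[s Hp ->]; apply/connectP; exists s => //.
by apply: restrict_path => //; rewrite inE connect0.
Qed.

Lemma stepA (T : finType) (r : rel T) (I : pred T) x y :
  connect r x y -> I x != I y -> exists s t, [/\ r s t, I s != I t & connect r x s].
Proof.
move=> /connectP[p Hp ->]; elim: p x Hp => [|t p IH] x /=; first by rewrite eqxx.
case/andP=> Hxt Hp Hne; case: (boolP (I x == I t)) => [/eqP E|N].
  have H0 : I t != I (last t p) by rewrite -E.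
  have [s [u [H1 H2 H3]]] := IH t Hp H0.
  by exists s, u; split => //; exact: connect_trans (connect1 Hxt) H3.
by exists x, t; split => //; exact: connect0.
Qed.

Lemma par1 (u v b d : nat) : b < d -> u < v -> u != b -> u != d -> v != b -> v != d ->
  ((b < u) && (u < d)) != ((b < v) && (v < d)) -> ((u < b) && (b < v)) != ((u < d) && (d < v)).
Proof. move=> *. lia. Qed.

Lemma par2 (p1 p2 q1 q2 : nat) : p1 < p2 -> q1 < q2 -> p1 != q1 -> p1 != q2 -> p2 != q1 -> p2 != q2 ->
  ((p1 < q1) && (q1 < p2)) != ((p1 < q2) && (q2 < p2)) ->
  ((p1 < q1) && (q1 < p2) && (p2 < q2)) || ((q1 < p1) && (p1 < q2) && (q2 < p2)).
Proof. move=> *. lia. Qed.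

Lemma NC_sub n (e : rel 'I_n) (V : {set 'I_n}) (B : {set 'I_n * 'I_n}) : B \in NC e V -> B \subset edges e V.
Proof. by rewrite inE => /andP[/andP[]]. Qed.

Lemma NC_closed n (e : rel 'I_n) (V : {set 'I_n}) (B : {set 'I_n * 'I_n}) p : B \in NC e V -> p \in edges e V ->
  connect (adj B) p.1 p.2 -> p \in B.
Proof. by rewrite inE => /andP[/andP[_ /forallP/(_ p) H] _] Hp Hc; move: H; rewrite Hp Hc. Qed.

Lemma NC_nc n (e : rel 'I_n) (V : {set 'I_n}) (B : {set 'I_n * 'I_n}) a b c d : B \in NC e V ->
  a \in V -> b \in V -> c \in V -> d \in V -> a < b -> b < c -> c < d ->
  connect (adj B) a c -> connect (adj B) b d -> connect (adj B) a b.
Proof.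
rewrite inE => /andP[_ H] Ha Hb Hc Hd ab bc cd Hac Hbd; apply/negPn/negP => Nab.
move/negP: H; apply; apply/existsP; exists a; rewrite Ha; apply/existsP; exists b; rewrite Hb.
apply/existsP; exists c; rewrite Hc; apply/existsP; exists d; rewrite Hd /=.
by rewrite ab bc cd Hac Hbd Nab.
Qed.

Lemma NCI n (e : rel 'I_n) (V : {set 'I_n}) (B : {set 'I_n * 'I_n}) : B \subset edges e V ->
  (forall p, p \in edges e V -> connect (adj B) p.1 p.2 -> p \in B) ->
  (forall a b c d, a \in V -> b \in V -> c \in V -> d \in V -> a < b -> b < c -> c < d ->
  connect (adj B) a c -> connect (adj B) b d -> connect (adj B) a b) ->
  B \in NC e V.
Proof.
move=> s cl nc; rewrite inE; apply/andP; split.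
  rewrite /is_bond s /=; apply/forallP => p; apply/implyP => Hp; apply/implyP; exact: cl.
apply/negP => /existsP[a /andP[Ha /existsP[b /andP[Hb /existsP[c /andP[Hc /existsP[d /andP[Hd]]]]]]]].
case/and5P => ab bc cd Hac /andP[Hbd]; by rewrite (nc a b c d).
Qed.

Lemma edges_sub n (e : rel 'I_n) C : edges e C \subset edges e setT.
Proof. by apply/subsetP => p; rewrite !inE => /and4P[-> _ _ ->]. Qed.

Lemma edge_comp n (e : rel 'I_n) p : p \in edges e setT -> p \in edges e (comp e p.1).
Proof. by rewrite !inE => /and4P[-> _ _ H]; rewrite connect0 connect1. Qed.

Lemma comp_same n (e : rel 'I_n) a b x : symmetric e -> x \in comp e a -> x \in comp e b ->
  comp e a = comp e b.
Proof. by move=> sym Ha Hb; rewrite -(comp_eq sym Ha) (comp_eq sym Hb). Qed.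

Theorem lemma2p9 (n : nat) (e : rel 'I_n) :
  simple_graph e ->
  (forall C C', C \in components e -> C' \in components e -> C != C' ->
     forall p q, p \in edges e C -> q \in edges e C' -> ~~ cross p q) ->
  exists phi : {set 'I_n * 'I_n} -> {ffun {set 'I_n} -> {set 'I_n * 'I_n}},
    [/\ {in NC e setT, forall B, phi B \in NCprod e},
        {in NC e setT &, injective phi},
        (forall F, F \in NCprod e -> exists2 B, B \in NC e setT & phi B = F) &
        {in NC e setT &, forall B B' : {set 'I_n * 'I_n}, (B \subset B') = prod_le e (phi B) (phi B')}].
Proof.
move=> [sym irr] Hnc.
pose phi (B : {set 'I_n * 'I_n}) : {ffun {set 'I_n} -> {set 'I_n * 'I_n}} :=
  [ffun C => if C \in components e then B :&: edges e C else set0].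
have Hle : {in NC e setT &, forall B B' : {set 'I_n * 'I_n},
    (B \subset B') = prod_le e (phi B) (phi B')}.
  move=> B B' HB HB'; apply/idP/idP => H.
    apply/forallP => C; apply/implyP => HC; rewrite !ffunE HC; exact: setSI.
  apply/subsetP => p Hp.
  have Ep := edge_comp (subsetP (NC_sub HB) p Hp).
  move/forallP/(_ (comp e p.1)): H; rewrite comp_in /= !ffunE comp_in.
  by move/subsetP/(_ p); rewrite !in_setI Hp Ep => /(_ isT) /andP[].
exists phi; split => //.
- move=> B HB; rewrite inE; apply/forallP => C; rewrite ffunE.
  case: (boolP (C \in components e)) => HC; last by rewrite ?(negbTE HC).
  rewrite ?HC.
  have [x Cx] := componentsP HC.
  apply: NCI; first exact: subsetIr.
    move=> p Hp Hc; rewrite inE Hp andbT; apply: (NC_closed HB).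
      exact: (subsetP (edges_sub e C)).
    by apply: adj_mono Hc; apply: subsetIl.
  move=> a b c d Ha Hb Hc Hd ab bc cd Hac Hbd.
  have Hab : connect (adj B) a b.
    apply: (NC_nc HB) ab bc cd _ _; rewrite ?inE //; apply: adj_mono; try eassumption; exact: subsetIl.
  have := restrict sym (NC_sub HB) Hab.
  by rewrite (comp_eq sym (_ : a \in comp e x)) -?Cx.
- move=> B B' HB HB' E; apply/eqP; rewrite eqEsubset (Hle B B') // (Hle B' B) // E.
  by rewrite andbb; apply/forallP => C; apply/implyP => _.
move=> F HF.
have HFC : forall C, C \in components e -> F C \in NC e C.
  by move=> C HC; move: HF; rewrite inE => /forallP/(_ C); rewrite HC.
have HF0 : forall C, C \notin components e -> F C = set0.
  by move=> C HC; move: HF; rewrite inE => /forallP/(_ C); rewrite (negbTE HC) => /eqP.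
pose B := \bigcup_(C in components e) F C.
have FB : forall C, C \in components e -> F C \subset B.
  by move=> C HC; apply/subsetP => p Hp; apply/bigcupP; exists C.
have HBC : forall C, C \in components e -> B :&: edges e C = F C.
  move=> C HC; apply/setP => p; rewrite inE; apply/idP/idP.
    case/andP => /bigcupP[C' HC' Hp] HpC.
    have HpC' := subsetP (NC_sub (HFC C' HC')) p Hp.
    have [x Cx] := componentsP HC; have [x' Cx'] := componentsP HC'.
    move: HpC HpC'; rewrite !inE => /and4P[_ H1 _ _] /and4P[_ H1' _ _].
    rewrite Cx Cx' in H1 H1'; have := comp_same sym H1 H1'.
    by rewrite -Cx -Cx' => ->.
  by move=> Hp; rewrite (subsetP (FB C HC)) //= (subsetP (NC_sub (HFC C HC))).
have sB : B \subset edges e setT.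
  apply/subsetP => p /bigcupP[C HC Hp].
  exact: (subsetP (edges_sub e C)) (subsetP (NC_sub (HFC C HC)) p Hp).
exists B.
  apply: NCI => //.
    move=> p Hp Hc.
    have := restrict sym sB Hc; rewrite (HBC _ (comp_in e p.1)) => Hc'.
    apply: (subsetP (FB _ (comp_in e p.1))).
    exact: (NC_closed (HFC _ (comp_in e p.1)) (edge_comp Hp)).
  move=> a b c d _ _ _ _ ab bc cd Hac Hbd.
  case: (boolP (connect e a b)) => Hab.
    have Hb : b \in comp e a by rewrite inE.
    have Hc : c \in comp e a by rewrite inE (connect_adj_e sym sB Hac).
    have Hd : d \in comp e a.
      by rewrite inE (connect_trans Hab (connect_adj_e sym sB Hbd)).
    have Hac' := restrict sym sB Hac.
    have Hbd' := restrict sym sB Hbd.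
    rewrite (comp_eq sym Hb) in Hbd'.
    rewrite (HBC _ (comp_in e a)) in Hac' Hbd'.
    apply: adj_mono (FB _ (comp_in e a)) _.
    apply: (NC_nc (HFC _ (comp_in e a))) ab bc cd Hac' Hbd' => //.
    by rewrite inE connect0.
  exfalso.
  have NE : comp e a != comp e b.
    apply/eqP => E; move/negP: Hab; apply.
    have Hbb : b \in comp e b by rewrite inE connect0.
    by move: Hbb; rewrite -E inE.
  have disj : forall x y, x \in comp e a -> y \in comp e b -> nat_of_ord x != nat_of_ord y.
    move=> x y Hx Hy; apply/eqP => /val_inj Exy; subst y.
    by move/eqP: NE; apply; exact: comp_same sym Hx Hy.
  have Hac' := restrict sym sB Hac.
  pose I := fun x : 'I_n => (b < x) && (x < d).
  have Iac : I a != I c by rewrite /I /=; lia.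
  have [s [t [Hst HI _]]] := stepA Hac' Iac.
  have sBa : B :&: edges e (comp e a) \subset edges e setT.
    exact: subset_trans (subsetIr _ _) (edges_sub e _).
  have [p Hp Hpst] := adj_lt sBa Hst.
  have HpI : I p.1 != I p.2.
    by case/orP: Hpst => /andP[/eqP-> /eqP->] //; rewrite eq_sym.
  move: Hp; rewrite in_setI => /andP[HpB HpE].
  have := HpE; rewrite inE => /and4P[p12 Hp1 Hp2 _].
  have Hb : b \in comp e b by rewrite inE connect0.
  have Hd : d \in comp e b by rewrite inE (connect_adj_e sym sB Hbd).
  pose J := fun x : 'I_n => (p.1 < x) && (x < p.2).
  have Jbd : J b != J d.
    apply: par1 => //; first exact: ltn_trans bc cd; exact: disj.
  have Hbd' := restrict sym sB Hbd.
  have [s' [t' [Hst' HJ _]]] := stepA Hbd' Jbd.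
  have sBb : B :&: edges e (comp e b) \subset edges e setT.
    exact: subset_trans (subsetIr _ _) (edges_sub e _).
  have [q Hq Hqst] := adj_lt sBb Hst'.
  have HqJ : J q.1 != J q.2.
    by case/orP: Hqst => /andP[/eqP-> /eqP->] //; rewrite eq_sym.
  move: Hq; rewrite in_setI => /andP[HqB HqE].
  have := HqE; rewrite inE => /and4P[q12 Hq1 Hq2 _].
  have := Hnc _ _ (comp_in e a) (comp_in e b) NE p q HpE HqE.
  rewrite /cross => /negP; apply; apply: par2 => //; exact: disj.
apply/ffunP => C; rewrite ffunE; case: ifP => HC; first exact: HBC.
by rewrite HF0 // HC.
Qed.
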